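(* Let $n,a,t\in\mathbb N$ with $t<a<n$. Let $\mathcal F,\mathcal G\subseteq\binom{[n]}{a}$ be such that $L_{t+1}(G)\not\preceq_{t+1}R_{t+1}(F)$ for all $F\in\mathcal F$, $G\in\mathcal G$. Let $\mathbf X$ and $\mathbf Y$ be independent random subsets of $[n]$, each distributed according to $\mu_{a/n}$. Then $$\Pr[\mathbf X\in\mathcal F,\ \mathbf Y\in\mathcal G]\le 4n\cdot\exp\left(-(a-t-1)^2/(20a)\right).$$
   Context: $[n]=\{1,\dots,n\}$, $\binom{[n]}{l}$ is the family of $l$-element subsets of $[n]$. For $X\subseteq[n]$ and $1\le i\le|X|$, $m(X,i)$ is the $i$-th smallest element of $X$. For $l\in[n]$, the partial order $\preceq_l$ on $\binom{[n]}{l}$ is defined by $X\preceq_l Y$ iff $m(X,i)\le m(Y,i)$ for all $1\le i\le l$. For $X\in\binom{[n]}{a}$ and $j\le a$, $L_j(X)$ is the set of the $j$ smallest elements of $X$ and $R_j(X)$ the set of the $j$ largest elements of $X$. For $p\in[0,1]$, $\mu_p$ is the probability measure on subsets of $[n]$ giving $X\subseteq[n]$ probability $p^{|X|}(1-p)^{n-|X|}$ (each element included independently with probability $p$). *)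

(* Defs.v *)
From HB Require Import structures.
From mathcomp Require Import all_boot all_order all_algebra.
From mathcomp Require Import all_classical all_reals all_analysis.
Set Implicit Arguments. Unset Strict Implicit. Unset Printing Implicit Defensive.
Import Order.TTheory GRing.Theory Num.Theory.

(* Ground set [n] = {1,..,n} is represented by 'I_n = {0,..,n-1}
   (shift by one; order-preserving, so m(X,i), L_j, R_j, preceq are unaffected). *)

Section Defs.
Variable n : nat.

Definition sorted_elems (X : {set 'I_n}) : seq nat :=
  sort leq [seq val x | x <- enum X].

Definition m_ (X : {set 'I_n}) (i : nat) : nat := nth 0 (sorted_elems X) i.-1.

Definition Lset (j : nat) (X : {set 'I_n}) : {set 'I_n} :=
  [set x in X | index (val x) (sorted_elems X) < j].

Definition Rset (j : nat) (X : {set 'I_n}) : {set 'I_n} :=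
  [set x in X | #|X| - j <= index (val x) (sorted_elems X)].

Definition preceq (l : nat) (X Y : {set 'I_n}) : bool :=
  [forall i : 'I_l, m_ X i.+1 <= m_ Y i.+1].

Definition mu {R : pzRingType} (p : R) (X : {set 'I_n}) : R :=
  p ^+ #|X| * (1 - p) ^+ (n - #|X|).

Definition joint_prob {R : pzRingType} (p : R) (F G : {set {set 'I_n}}) : R :=
  \sum_(XY in finset.setX F G) mu p XY.1 * mu p XY.2.
End Defs.

(* Main.v *)
Require Import Defs.
From HB Require Import structures.
From mathcomp Require Import all_boot all_order all_algebra.
From mathcomp Require Import all_classical all_reals all_analysis.
From mathcomp Require Import lra zify ring.
Import Order.TTheory GRing.Theory Num.Theory.
Set Implicit Arguments. Unset Strict Implicit.

Section Comb.
Variable n : nat.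
Implicit Types X Y : {set 'I_n}.

Definition cnt (j : 'I_n) X := #|[set x in X | (x <= j)%N]|.

Lemma se_sorted X : sorted leq (sorted_elems X).
Proof. by rewrite /sorted_elems; apply: sort_sorted; exact: leq_total. Qed.
Lemma se_uniq X : uniq (sorted_elems X).
Proof. by rewrite sort_uniq map_inj_uniq ?enum_uniq //; exact: val_inj. Qed.
Lemma se_memI X (x : 'I_n) : (val x \in sorted_elems X) = (x \in X).
Proof. by rewrite mem_sort mem_map ?mem_enum //; exact: val_inj. Qed.
Lemma se_lt X v : v \in sorted_elems X -> (v < n)%N.
Proof. by rewrite mem_sort => /mapP [x _ ->]; exact: ltn_ord. Qed.
Lemma se_size X : size (sorted_elems X) = #|X|.
Proof. by rewrite size_sort size_map cardE. Qed.

Lemma se_eq (S : {set 'I_n}) s : sorted leq s -> uniq s ->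
  (forall v, v \in s -> (v < n)%N) ->
  (forall x : 'I_n, (x \in S) = (val x \in s)) -> sorted_elems S = s.
Proof.
move=> ss us sn hS.
apply: (sorted_eq leq_trans anti_leq); [exact: se_sorted| exact: ss|].
apply: uniq_perm; [exact: se_uniq| exact: us|].
move=> v; case: (ltnP v n) => [vn|nv].
- have -> : v = val (Ordinal vn) by [].
  by rewrite se_memI hS.
- apply/idP/idP.
  + by move/se_lt; rewrite ltnNge nv.
  + by move/sn; rewrite ltnNge nv.
Qed.

Lemma se_Lset j X : sorted_elems (Lset j X) = take j (sorted_elems X).
Proof.
apply: se_eq.
- exact: take_sorted _ (se_sorted X).
- exact: take_uniq (se_uniq X).
- by move=> v /mem_take /se_lt.
- move=> x; rewrite inE.
  case xX: (x \in X).
  + by rewrite in_take // se_memI.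
  + apply/esym/negbTE; apply: contraFN xX => /mem_take; by rewrite se_memI.
Qed.

Lemma in_drop_uniq (T : eqType) (s : seq T) m x : uniq s -> x \in s ->
  (x \in drop m s) = (m <= index x s)%N.
Proof.
move=> us xs.
have hd : ~~ has (mem (take m s)) (drop m s).
  by move: us; rewrite -{1}(cat_take_drop m s) cat_uniq => /and3P [].
have: x \in take m s ++ drop m s by rewrite cat_take_drop.
rewrite mem_cat in_take //.
case: (ltnP (index x s) m) => h1 /=; last by move=> ->.
move=> _; apply/negP => xd; move/hasPn: hd => /(_ x xd) /negP; apply.
by rewrite /= in_take.
Qed.

Lemma se_Rset j X : sorted_elems (Rset j X) = drop (#|X| - j) (sorted_elems X).
Proof.
apply: se_eq.
- exact: drop_sorted _ (se_sorted X).
- exact: drop_uniq (se_uniq X).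
- by move=> v /mem_drop /se_lt.
- move=> x; rewrite inE.
  case xX: (x \in X).
  + by rewrite in_drop_uniq ?se_uniq // se_memI.
  + apply/esym/negbTE; apply: contraFN xX => /mem_drop; by rewrite se_memI.
Qed.

Lemma cnt_count j X : cnt j X = count (fun w => (w <= j)%N) (sorted_elems X).
Proof.
rewrite /cnt count_sort count_map cardE /enum_mem size_filter count_filter.
by apply: eq_count => x; rewrite /= !inE andbC.
Qed.

Lemma key t a X Y : (t < a)%N -> #|X| = a -> #|Y| = a ->
  ~~ preceq t.+1 (Lset t.+1 Y) (Rset t.+1 X) ->
  exists j : 'I_n, (cnt j Y + (a - t - 1).+1 <= cnt j X)%N.
Proof.
move=> ta hX hY /forallPn [i]; rewrite -ltnNge /m_ /= se_Lset se_Rset hX.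
have hi := ltn_ord i.
rewrite nth_take // nth_drop.
set sX := sorted_elems X; set sY := sorted_elems Y.
set k := (a - t - 1)%N.
have -> : (a - t.+1 = k)%N by rewrite /k subnS subn1.
have szX : size sX = a by rewrite se_size.
have szY : size sY = a by rewrite se_size.
have ki : (k + i < a)%N by rewrite /k; lia.
have ia : (i < a)%N by lia.
set u := nth 0 sY i; set v := nth 0 sX (k + i) => vu.
have vn : (v < n)%N by apply: (@se_lt X); rewrite mem_nth // szX.
exists (Ordinal vn); rewrite !cnt_count /=.
have c1 : (count (fun w => w <= v) sX >= (k + i).+1)%N.
  rewrite -(cat_take_drop (k + i).+1 sX) count_cat.
  have : all (fun w => w <= v) (take (k + i).+1 sX).
    apply/allP => w /(nthP 0) [l hl <-].
    rewrite size_takel ?szX // in hl.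
    rewrite nth_take //.
    apply: (sorted_leq_nth leq_trans leqnn 0 (se_sorted X)); rewrite ?inE ?szX //; lia.
  rewrite all_count => /eqP ->; rewrite size_takel ?szX //; lia.
have c2 : (count (fun w => w <= v) sY <= i)%N.
  rewrite -(cat_take_drop i sY) count_cat.
  rewrite (eq_in_count (a2 := pred0) _ (s := drop i sY)) ?count_pred0.
    by rewrite addn0 (leq_trans (count_size _ _)) // size_takel ?szY //; lia.
  move=> w /(nthP 0) [l hl <-] /=.
  rewrite size_drop szY in hl.
  apply/negbTE; rewrite nth_drop -ltnNge; apply: (leq_trans vu).
  apply: (sorted_leq_nth leq_trans leqnn 0 (se_sorted Y)); rewrite ?inE ?szY //; lia.
move: c1 c2; rewrite /sX /sY; lia.
Qed.
End Comb.

Unset Implicit Arguments. Set Strict Implicit.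
Local Open Scope ring_scope.

Lemma sum_sets (R : realType) n (h : 'I_n -> bool -> R) :
  \sum_(X : {set 'I_n}) \prod_i h i (i \in X) = \prod_i (h i true + h i false).
Proof.
rewrite (eq_bigr (fun i => \sum_(b : bool) h i b)); last by move=> i _; rewrite big_bool.
rewrite bigA_distr_bigA /=.
rewrite (reindex (@finfun_of_set _)) /=; last first.
  by exists (@FinSet _) => [[f]|f].
apply: eq_bigr => X _; apply: eq_bigr => i _. by rewrite unlock.
Qed.

Lemma mu_prod (R : realType) n (p : R) (X : {set 'I_n}) :
  mu p X = \prod_i (if i \in X then p else 1 - p).
Proof.
rewrite /mu (bigID (mem X)) /=; congr (_ * _).
  rewrite (eq_bigr (fun _ => p)); last by move=> i /= Hi; rewrite Hi.
  by rewrite prodr_const.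
rewrite (eq_bigr (fun _ => 1 - p)); last by move=> i /= Hi; rewrite (negbTE Hi).
rewrite prodr_const; congr (_ ^+ _).
have e : #|(fun i : 'I_n => i \notin X)| = #|~: X| by apply: eq_card => i; rewrite !inE.
by rewrite e cardsCs finset.setCK card_ord.
Qed.

Lemma cnt_prod (R : realType) n (r : R) (j : 'I_n) (X : {set 'I_n}) :
  r ^+ cnt j X = \prod_i (if (i \in X) && (i <= j)%N then r else 1).
Proof.
rewrite -big_mkcond /= (eq_bigl (mem [set x in X | (x <= j)%N])) ?prodr_const //.
by move=> x; rewrite /= inE.
Qed.

Lemma sum_mu_cnt (R : realType) n (p r : R) (j : 'I_n) :
  \sum_(X : {set 'I_n}) mu p X * r ^+ cnt j X =
  \prod_(i : 'I_n) (if (i <= j)%N then p * r + (1 - p) else 1).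
Proof.
rewrite (eq_bigr (fun X : {set 'I_n} => \prod_(i : 'I_n) ((if i \in X then p else 1 - p) *
    (if (i \in X) && (i <= j)%N then r else 1)))); last first.
  by move=> X _; rewrite mu_prod cnt_prod -big_split.
rewrite (@sum_sets _ _ (fun (i : 'I_n) b => (if b then p else 1 - p) * (if b && (i <= j)%N then r else 1))).
apply: eq_bigr => i _ /=; case: (i <= j)%N; rewrite /= ?mulr1 //.
by rewrite addrC subrK.
Qed.

Theorem lemma4 (R : realType) (n a t : nat) (hta : (t < a)%N) (han : (a < n)%N)
  (F G : {set {set 'I_n}})
  (hF : forall X, X \in F -> #|X| = a)
  (hG : forall Y, Y \in G -> #|Y| = a)
  (hFG : forall X Y, X \in F -> Y \in G ->
     ~~ preceq t.+1 (Lset t.+1 Y) (Rset t.+1 X)) :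
  joint_prob ((a%:R : R) / n%:R) F G <=
    4 * n%:R * expR (- (((a - t - 1)%:R) ^+ 2 / (20 * a%:R))).
Proof.
have a0 : (0 < a)%N by lia.
have n0 : (0 < n)%N by lia.
set p : R := a%:R / n%:R.
set k := (a - t - 1)%N.
have hn : (0:R) < n%:R by rewrite ltr0n.
have ha : (0:R) < a%:R by rewrite ltr0n.
have hp0 : 0 <= p by rewrite /p divr_ge0 // ler0n.
have hp1 : p <= 1 by rewrite /p ler_pdivrMr // mul1r ler_nat ltnW.
have hpn : n%:R * p = a%:R by rewrite /p mulrC divfK // gt_eqF.
have hka : (k <= a)%N by lia.
set lam : R := k%:R / (4 * a%:R).
have hl0 : 0 <= lam by rewrite /lam divr_ge0 // ?mulr_ge0 // ler0n.
have hl1 : lam <= 1/4.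
  rewrite /lam ler_pdivrMr ?mulr_gt0 //.
  have : (k%:R : R) <= a%:R by rewrite ler_nat.
  lra.
set q := expR lam; set q' := expR (- lam).
have hqq : q * q' = 1 by rewrite /q /q' -expRD subrr expR0.
have hq0 : 0 < q by exact: expR_gt0.
have hq'0 : 0 < q' by exact: expR_gt0.
have hq1 : 1 + lam <= q by exact: expR_ge1Dx.
have hq'1 : 1 - lam <= q' by exact: expR_ge1Dx.
have hcoord : (p * q + (1 - p)) * (p * q' + (1 - p)) <= 1 + p * (3 * lam ^+ 2).
  have h1 : q * (1 - lam) <= q * q' by rewrite ler_wpM2l // ltW.
  have h2 : q' * (1 + lam) <= q * q' by rewrite mulrC ler_wpM2r // ltW.
  rewrite hqq in h1 h2.
  have hlp : 0 < 1 - lam by lra.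
  have hlp' : 0 < 1 + lam by lra.
  have hqa : q <= 1 + lam + 2 * lam ^+ 2.
    rewrite -(ler_pM2r hlp); apply: (le_trans h1).
    have : 0 <= lam ^+ 2 * (1 - 2 * lam) by apply: mulr_ge0; [exact: sqr_ge0 | lra].
    nra.
  have hqb : q' <= 1 - lam + lam ^+ 2.
    rewrite -(ler_pM2r hlp'); apply: (le_trans h2).
    have : 0 <= lam ^+ 3 by apply: exprn_ge0.
    nra.
  have e : (p * q + (1 - p)) * (p * q' + (1 - p)) =
     p ^+ 2 * (q * q') + p * (1 - p) * (q + q') + (1 - p) ^+ 2 by ring.
  rewrite e hqq.
  set s := q + q'.
  have hs0 : 2 <= s by rewrite /s; lra.
  have hs1 : s <= 2 + 3 * lam ^+ 2 by rewrite /s; lra.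
  nra.
pose W (j : 'I_n) (X Y : {set 'I_n}) :=
  mu p X * q ^+ cnt j X * (mu p Y * q' ^+ cnt j Y) * q' ^+ k.+1.
have mu0 X : 0 <= mu p X by rewrite /mu mulr_ge0 // exprn_ge0 // subr_ge0.
have W0 j X Y : 0 <= W j X Y.
  by rewrite /W; repeat apply: mulr_ge0 => //; apply: exprn_ge0; exact: ltW.
apply: (@le_trans _ _ (\sum_(XY in finset.setX F G) \sum_(j : 'I_n) W j XY.1 XY.2)).
  rewrite /joint_prob; apply: ler_sum => -[X Y]; rewrite finset.in_setX /= => /andP [hX hY].
  have [j hj] := key hta (hF X hX) (hG Y hY) (hFG X Y hX hY).
  rewrite (bigD1 j) //=.
  apply: (@le_trans _ _ (W j X Y)); last by rewrite lerDl sumr_ge0.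
  rewrite /W; move: hj; rewrite -/k.
  set cY := cnt j Y; set cX := cnt j X => hj.
  have -> : cX = (cY + k.+1 + (cX - (cY + k.+1)))%N by rewrite subnKC.
  set d := (cX - _)%N.
  rewrite !exprD.
  have e1 : q ^+ cY * q' ^+ cY = 1 by rewrite -exprMn hqq expr1n.
  have e2 : q ^+ k.+1 * q' ^+ k.+1 = 1 by rewrite -exprMn hqq expr1n.
  have hd : 1 <= q ^+ d by apply: exprn_ege1; lra.
  have -> : mu p X * (q ^+ cY * q ^+ k.+1 * q ^+ d) * (mu p Y * q' ^+ cY) * q' ^+ k.+1
     = (mu p X * mu p Y) * ((q ^+ cY * q' ^+ cY) * (q ^+ k.+1 * q' ^+ k.+1) * q ^+ d) by ring.
  rewrite e1 e2 !mul1r; apply: ler_peMr => //; exact: mulr_ge0.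
apply: (@le_trans _ _ (\sum_(XY : {set 'I_n} * {set 'I_n}) \sum_(j : 'I_n) W j XY.1 XY.2)).
  rewrite [X in X <= _]big_mkcond /=; apply: ler_sum => XY _.
  case: ifP => _ //; apply: sumr_ge0 => *; exact: W0.
rewrite exchange_big /=.
rewrite (eq_bigr (fun j : 'I_n => (\prod_(i : 'I_n) (if (i <= j)%N then p * q + (1 - p) else 1)) *
   (\prod_(i : 'I_n) (if (i <= j)%N then p * q' + (1 - p) else 1)) * q' ^+ k.+1)); last first.
  move=> j _; rewrite -!sum_mu_cnt.
  symmetry; rewrite !mulr_suml.
  rewrite -(pair_bigA _ (W j)); apply: eq_bigr => X _.
  rewrite mulr_sumr mulr_suml; apply: eq_bigr => Y _; by rewrite /W.
apply: (@le_trans _ _ (\sum_(j : 'I_n) (expR (n%:R * (p * (3 * lam ^+ 2))) * q' ^+ k.+1))).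
  apply: ler_sum => j _; apply: ler_wpM2r; first by apply: exprn_ge0; exact: ltW.
  rewrite -big_split /= expRM_natl.
  apply: (@le_trans _ _ (\prod_(i : 'I_n) (1 + p * (3 * lam ^+ 2)))).
    apply: ler_prod => i _; case: ifP => _.
      rewrite hcoord andbT; apply: mulr_ge0; nra.
    rewrite mulr1 ler01 /=; nra.
  rewrite prodr_const card_ord; apply: lerXn2r; rewrite ?nnegrE ?expR_ge0 ?expR_ge1Dx //.
  nra.
rewrite sumr_const card_ord -[X in X <= _]mulr_natl /q' -expRM_natl -expRD.
apply: (@le_trans _ _ (n%:R * expR (- ((k%:R) ^+ 2 / (20 * a%:R))))).
  apply: ler_wpM2l; first exact: ler0n.
  rewrite ler_expR.
  have hk1 : (k.+1%:R : R) = k%:R + 1 by rewrite -addn1 natrD.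
  rewrite mulrA hpn /lam hk1 -subr_ge0.
  apply: (le_trans (_ : 0 <= ((k%:R : R) ^+ 2 + 20 * k%:R) / (80 * a%:R))).
    by rewrite divr_ge0 // ?mulr_ge0 // ?addr_ge0 // ?exprn_ge0 // ?mulr_ge0 // ler0n.
  rewrite le_eqVlt; apply/orP; left; apply/eqP; field; lra.
have := expR_gt0 (- ((k%:R : R) ^+ 2 / (20 * a%:R))).
nra.
Qed.
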